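(* Let $\mathbb{F}$ be a field of characteristic $\ne2$ and let $M$ be a fully symmetric $n^d\times n^d$ matrix over $\mathbb{F}$. Then $\mathrm{PT\text{-}rank}(M)\le 2^{d-1}\,\mathrm{SoS}(Q_M)$.
   Context: Rows and columns are indexed by $[n]^d$. For $k\in[d]$, $M^{\top_k}$ swaps the $k$-th row index with the $k$-th column index; $M^{\top_\kappa}$ composes these over $k\in\kappa$. $M$ is fully symmetric if $M^{\top_k}=M$ for all $k\in[d]$. $M$ is PT-basic if $\mathrm{rank}(M^{\top_\kappa})=1$ for some $\kappa\subseteq[d]$; $\mathrm{PT\text{-}rank}(M)$ is the least number of PT-basic matrices summing to $M$. $Q_M=\sum_{\vec i,\vec j\in[n]^d}M_{\vec i,\vec j}X^{(1)}_{i_1}X^{(1)}_{j_1}\cdots X^{(d)}_{i_d}X^{(d)}_{j_d}$ is a commutative polynomial in $d$ blocks of $n$ variables. $\mathrm{SoS}(f)$ is the least $s$ such that $f=g_1^2+\cdots+g_s^2$ with each $g_i$ a $d$-multilinear form over $\mathbb{F}$ (each monomial of $g_i$ has exactly one variable from each block), and $\infty$ if none exists. *)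

(* Defs.v *)
From HB Require Import structures.
From mathcomp Require Import all_boot all_order all_algebra.
From mathcomp Require Import mpoly.
Set Implicit Arguments. Unset Strict Implicit. Unset Printing Implicit Defensive.
Import GRing.Theory.
Local Open Scope ring_scope.

Definition idx (n d : nat) := {ffun 'I_d -> 'I_n}.

Definition pmat (F : fieldType) (n d : nat) := 'M[F]_(#|{: idx n d}|).

Definition ent (F : fieldType) n d (M : pmat F n d) (i j : idx n d) : F :=
  M (enum_rank i) (enum_rank j).

Definition ptswap n d (kappa : {set 'I_d}) (i j : idx n d) : idx n d :=
  [ffun k => if k \in kappa then j k else i k].

Definition ptrans (F : fieldType) n d (kappa : {set 'I_d}) (M : pmat F n d)
  : pmat F n d :=
  \matrix_(a, b) ent M (ptswap kappa (enum_val a) (enum_val b))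
                       (ptswap kappa (enum_val b) (enum_val a)).

Definition ptrans1 (F : fieldType) n d (k : 'I_d) (M : pmat F n d) :=
  ptrans [set k] M.

Definition fully_symmetric (F : fieldType) n d (M : pmat F n d) : Prop :=
  forall k : 'I_d, ptrans1 k M = M.

Definition PT_basic (F : fieldType) n d (M : pmat F n d) : Prop :=
  exists kappa : {set 'I_d}, \rank (ptrans kappa M) = 1%N.

Definition PT_decomp (F : fieldType) n d (M : pmat F n d) (r : nat) : Prop :=
  exists B : 'I_r -> pmat F n d,
    (forall t, PT_basic (B t)) /\ M = \sum_(t < r) B t.

Definition PT_rank_le (F : fieldType) n d (M : pmat F n d) (r : nat) : Prop :=
  exists2 r', (r' <= r)%N & PT_decomp M r'.

Definition pvar (F : fieldType) (n d : nat) := #|{: 'I_d * 'I_n}|.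
Definition polyR (F : fieldType) n d := {mpoly F[pvar F n d]}.

Definition Xv (F : fieldType) n d (k : 'I_d) (i : 'I_n) : polyR F n d :=
  'X_(enum_rank (k, i)).

Definition QM (F : fieldType) n d (M : pmat F n d) : polyR F n d :=
  \sum_(i : idx n d) \sum_(j : idx n d)
     ent M i j *: \prod_(k < d) (Xv F k (i k) * Xv F k (j k)).

Definition mlform (F : fieldType) n d (c : idx n d -> F) : polyR F n d :=
  \sum_(i : idx n d) c i *: \prod_(k < d) Xv F k (i k).

Definition is_SoS (F : fieldType) n d (f : polyR F n d) (s : nat) : Prop :=
  exists c : 'I_s -> idx n d -> F, f = \sum_(t < s) (mlform (c t)) ^+ 2.

(* Main.v *)
Require Import Defs.
From HB Require Import structures.
From mathcomp Require Import all_boot all_order all_algebra.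
From mathcomp Require Import mpoly.
Local Open Scope ring_scope.

Module Aux.
Set Implicit Arguments. Unset Strict Implicit. Unset Printing Implicit Defensive.
Import GRing.Theory.

Section PT.
Variables (F : fieldType) (n d : nat).
Implicit Types (A B : pmat F n d) (kappa : {set 'I_d}).

Lemma entE A i j : ent A i j = A (enum_rank i) (enum_rank j).
Proof. by []. Qed.

Lemma ptransE kappa A i j :
  ent (ptrans kappa A) i j = ent A (ptswap kappa i j) (ptswap kappa j i).
Proof. by rewrite /ent /ptrans mxE !enum_rankK. Qed.

Lemma ent_ext A B : (forall i j, ent A i j = ent B i j) -> A = B.
Proof.
move=> h; apply/matrixP => u v; have := h (enum_val u) (enum_val v).
by rewrite /ent !enum_valK.
Qed.

Lemma ptrans_comp (k1 k2 k3 : {set 'I_d}) A :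
  (forall k, (k \in k3) = (k \in k1) (+) (k \in k2)) ->
  ptrans k1 (ptrans k2 A) = ptrans k3 A.
Proof.
move=> h; apply: ent_ext => i j; rewrite !ptransE; congr ent;
 apply/ffunP => k; rewrite !ffunE h; 
 by case: (k \in k1); case: (k \in k2).
Qed.

Lemma ptrans0 A : ptrans set0 A = A.
Proof.
apply: ent_ext => i j; rewrite ptransE; congr ent; apply/ffunP => k;
by rewrite ffunE inE.
Qed.

Lemma ptransK kappa A : ptrans kappa (ptrans kappa A) = A.
Proof. by rewrite (@ptrans_comp kappa kappa set0) ?ptrans0 // => k; rewrite inE addbb. Qed.

Lemma ptransD kappa A B : ptrans kappa (A + B) = ptrans kappa A + ptrans kappa B.
Proof. by apply/matrixP => u v; rewrite /ptrans /ent !mxE. Qed.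

Lemma ptransZ kappa a A : ptrans kappa (a *: A) = a *: ptrans kappa A.
Proof. by apply/matrixP => u v; rewrite /ptrans /ent !mxE. Qed.

Lemma ptransN kappa A : ptrans kappa (- A) = - ptrans kappa A.
Proof. by apply/matrixP => u v; rewrite /ptrans /ent !mxE. Qed.

Lemma ptransZ0 kappa : ptrans kappa (0 : pmat F n d) = 0.
Proof. by apply/matrixP => u v; rewrite /ptrans /ent !mxE. Qed.

Lemma ptrans_sum kappa I (r : seq I) (P : pred I) (G : I -> pmat F n d) :
  ptrans kappa (\sum_(t <- r | P t) G t) = \sum_(t <- r | P t) ptrans kappa (G t).
Proof. exact: (big_morph _ (ptransD kappa) (ptransZ0 kappa)). Qed.

Lemma fs_all A : fully_symmetric A -> forall kappa, ptrans kappa A = A.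
Proof.
move=> hA kappa; move: {2}#|kappa| (erefl #|kappa|) => m.
elim: m kappa => [|m IH] kappa hk.
  by move/eqP: hk; rewrite cards_eq0 => /eqP ->; rewrite ptrans0.
have [k kk] : exists k, k \in kappa.
  by apply/set0Pn; rewrite -card_gt0 hk.
rewrite -(@ptrans_comp [set k] (kappa :\ k) kappa).
  by rewrite IH; [exact: hA | rewrite (cardsD1 k) kk in hk; case: hk].
move=> k'; rewrite !inE; case: eqP => [->|] //=; by rewrite kk.
Qed.

End PT.

Section Q.
Variables (F : fieldType) (n d : nat).
Implicit Types (A B : pmat F n d) (kappa : {set 'I_d}).

Definition PP (i j : idx n d) : polyR F n d :=
  \prod_(k < d) (Xv F k (i k) * Xv F k (j k)).

Lemma QME A : QM A = \sum_i \sum_j ent A i j *: PP i j.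
Proof. by []. Qed.

Lemma QMD A B : QM (A + B) = QM A + QM B.
Proof.
rewrite !QME -big_split /=; apply: eq_bigr => i _.
rewrite -big_split /=; apply: eq_bigr => j _.
by rewrite /ent mxE scalerDl.
Qed.

Lemma QM0 : QM (0 : pmat F n d) = 0.
Proof. by rewrite QME big1 // => i _; rewrite big1 // => j _; rewrite /ent mxE scale0r. Qed.

Lemma QMZ a A : QM (a *: A) = a *: QM A.
Proof.
rewrite !QME scaler_sumr; apply: eq_bigr => i _.
rewrite scaler_sumr; apply: eq_bigr => j _.
by rewrite /ent mxE scalerA.
Qed.

Lemma QMN A : QM (- A) = - QM A.
Proof. by rewrite -scaleN1r QMZ scaleN1r. Qed.

Lemma QM_sum I (r : seq I) (P : pred I) (G : I -> pmat F n d) :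
  QM (\sum_(t <- r | P t) G t) = \sum_(t <- r | P t) QM (G t).
Proof. exact: (big_morph _ QMD QM0). Qed.

Lemma PP_swap kappa i j : PP (ptswap kappa i j) (ptswap kappa j i) = PP i j.
Proof.
apply: eq_bigr => k _; rewrite !ffunE; case: (k \in kappa) => //.
by rewrite mulrC.
Qed.

Lemma QM_ptrans kappa A : QM (ptrans kappa A) = QM A.
Proof.
rewrite !QME !pair_bigA /=.
pose h (p : idx n d * idx n d) := (ptswap kappa p.1 p.2, ptswap kappa p.2 p.1).
have hK : involutive h.
  move=> [i j]; rewrite /h /=; congr pair; apply/ffunP => k; rewrite !ffunE;
  by case: (k \in kappa).
rewrite [RHS](reindex_inj (inv_inj hK)) /=.
apply: eq_bigr => [[i j]] _ /=.
by rewrite ptransE PP_swap.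
Qed.

Definition cvec (c : idx n d -> F) : 'cV[F]_(#|{: idx n d}|) :=
  \col_a c (enum_val a).

Definition Rm (c : idx n d -> F) : pmat F n d := cvec c *m (cvec c)^T.

Lemma Rm_ent c i j : ent (Rm c) i j = c i * c j.
Proof. by rewrite /ent /Rm mxE big_ord1 !mxE !enum_rankK. Qed.

Lemma QM_Rm c : QM (Rm c) = mlform c ^+ 2.
Proof.
rewrite QME expr2 /mlform mulr_suml; apply: eq_bigr => i _.
rewrite mulr_sumr; apply: eq_bigr => j _.
by rewrite Rm_ent -scalerAl -scalerAr scalerA /PP big_split.
Qed.

Lemma Rm_rank c : (\rank (Rm c) <= 1)%N.
Proof. exact: leq_trans (mxrankM_maxl _ _) (rank_leq_col _). Qed.

End Q.

Section Inj.
Variables (F : fieldType) (n d : nat).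
Implicit Types (A B S : pmat F n d) (kappa : {set 'I_d}).

Definition rk (k : 'I_d) (x : 'I_n) : 'I_(pvar F n d) := enum_rank (k, x).
Definition mono (i j : idx n d) : 'X_{1..pvar F n d} :=
  (\sum_(k < d) (U_(rk k (i k)) + U_(rk k (j k))))%MM.

Lemma PP_mono i j : PP F i j = 'X_[mono i j].
Proof.
rewrite /PP /mono (big_morph (@mpolyX _ F) (@mpolyXD _ F) (@mpolyX0 _ F)).
by apply: eq_bigr => k _; rewrite mpolyXD.
Qed.

Lemma rk_eq k x k' y : (rk k' y == rk k x) = (k' == k) && (y == x).
Proof. by rewrite /rk (inj_eq enum_rank_inj) xpair_eqE. Qed.

Lemma mono_ev i j k x : mono i j (rk k x) = ((i k == x) + (j k == x))%N.
Proof.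
rewrite /mono mnm_sumE (bigD1 k) //= big1 ?addn0.
  by rewrite mnmDE !mnm1E !rk_eq eqxx.
by move=> k' /negbTE nk; rewrite mnmDE !mnm1E !rk_eq nk.
Qed.

Lemma pair_nat (x y u v : 'I_n) :
  (forall z, ((x == z) + (y == z) = (u == z) + (v == z))%N) ->
  ((x == u) && (y == v)) || ((x == v) && (y == u)).
Proof.
move=> h; have [exu|nxu] := eqVneq x u; first subst u.
  by have := h v; rewrite eqxx; case: (x == v); case: (y == v).
have := h x; rewrite eqxx (eq_sym u x) (negbTE nxu).
have [exv|nvx] := eqVneq x v; last by case: (y == x).
subst v => _ /=; have := h u; rewrite eqxx (negbTE nxu) /=.
by case: (y == u).
Qed.

Lemma mono_eq i j a b : (mono i j == mono a b) =
  [forall k, ((i k == a k) && (j k == b k)) || ((i k == b k) && (j k == a k))].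
Proof.
apply/eqP/forallP => [h k|h].
  apply: pair_nat => z; rewrite -!mono_ev; by rewrite h.
rewrite /mono; apply: eq_bigr => k _.
by case/orP: (h k) => /andP[/eqP-> /eqP->] //; rewrite addmC.
Qed.
End Inj.

Section Inj2.
Variables (F : fieldType) (n d : nat).
Implicit Types (A B S : pmat F n d) (kappa : {set 'I_d}).

Lemma forall_prod (P : 'I_d -> bool) :
  ([forall k, P k]%:R : F) = \prod_k ((P k)%:R : F).
Proof.
case: (boolP [forall k, P k]) => [/forallP h | /forallPn [k nk]].
  by rewrite big1 // => k _; rewrite h.
by rewrite (bigD1 k) //= (negbTE nk) mul0r.
Qed.

Lemma sum_bool_card (T : finType) (P : pred T) :
  \sum_(p : T) ((P p)%:R : F) = (#|P|)%:R.
Proof.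
rewrite -sum1_card natr_sum [RHS]big_mkcond /=; apply: eq_bigr => p _.
by rewrite unfold_in; case: (P p).
Qed.

Lemma cnt_neq0 (a b : idx n d) : (2%:R : F) != 0 ->
  \sum_(i : idx n d) \sum_(j : idx n d)
     ([forall k, ((i k == a k) && (j k == b k)) || ((i k == b k) && (j k == a k))]%:R : F)
  != 0.
Proof.
move=> h2.
pose c k x y := ((x == a k) && (y == b k)) || ((x == b k) && (y == a k)).
have -> : \sum_(i : idx n d) \sum_(j : idx n d)
     ([forall k, ((i k == a k) && (j k == b k)) || ((i k == b k) && (j k == a k))]%:R : F)
   = \prod_k \sum_(x : 'I_n) \sum_(y : 'I_n) ((c k x y)%:R : F).
  transitivity (\sum_(i : idx n d) \prod_k \sum_(y : 'I_n) ((c k (i k) y)%:R : F)).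
    apply: eq_bigr => i _; rewrite bigA_distr_bigA; apply: eq_bigr => j _.
    by rewrite forall_prod.
  by rewrite bigA_distr_bigA.
apply/prodf_neq0 => k _.
rewrite pair_bigA /=.
have -> : \sum_p ((c k p.1 p.2)%:R : F) = \sum_p (((pred2 (a k, b k) (b k, a k)) p)%:R).
  by apply: eq_bigr => [[x y]] _ /=.
rewrite sum_bool_card card2.
by case: ((a k, b k) != (b k, a k)); rewrite ?oner_neq0.
Qed.


Lemma QM_inj S : (2%:R : F) != 0 -> fully_symmetric S -> QM S = 0 -> S = 0.
Proof.
move=> h2 hS hQ; have hS' := fs_all hS.
apply: ent_ext => a b; rewrite [RHS]/ent mxE.
have := congr1 (mcoeff (mono F a b)) hQ.
rewrite mcoeff0 QME raddf_sum.
have E : forall i j, mcoeff (mono F a b) (ent S i j *: PP F i j) =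
   ent S a b * ([forall k, ((i k == a k) && (j k == b k)) || ((i k == b k) && (j k == a k))]%:R).
  move=> i j; rewrite mcoeffZ PP_mono mcoeffX mono_eq.
  case: forallP => h; last by rewrite !mulr0.
  congr (_ * _).
  pose kappa := [set k | i k != a k].
  have ei : i = ptswap kappa a b.
    apply/ffunP => k; rewrite ffunE inE.
    case/orP: (h k) => /andP[/eqP-> _]; first by rewrite eqxx.
    by case: eqP => [->|].
  have ej : j = ptswap kappa b a.
    apply/ffunP => k; rewrite ffunE inE.
    case/orP: (h k) => /andP[/eqP-> /eqP->]; first by rewrite eqxx.
    by case: eqP => [->|].
  by rewrite ei ej -ptransE hS'.
rewrite (eq_bigr (fun i : idx n d => ent S a b * \sum_(j : idx n d) ([forall k, ((i k == a k) && (j k == b k)) || ((i k == b k) && (j k == a k))]%:R))); last first.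
  move=> i _; rewrite raddf_sum mulr_sumr; apply: eq_bigr => j _; exact: E.
rewrite -mulr_sumr => /eqP; rewrite mulf_eq0 (negbTE (cnt_neq0 a b h2)) orbF.
by move/eqP.
Qed.

End Inj2.

Section PTR.
Variables (F : fieldType) (n d : nat).
Implicit Types (A B X : pmat F n d) (kappa : {set 'I_d}).

Lemma PTR0 r : PT_rank_le (0 : pmat F n d) r.
Proof.
exists 0%N => //; exists (fun _ => 0); split; first by case.
by rewrite big_ord0.
Qed.

Lemma PTRD A B r1 r2 : PT_rank_le A r1 -> PT_rank_le B r2 ->
  PT_rank_le (A + B) (r1 + r2).
Proof.
move=> [r1' le1 [B1 [hB1 e1]]] [r2' le2 [B2 [hB2 e2]]].
exists (r1' + r2')%N; first exact: leq_add.
exists (fun t => match split t with inl x => B1 x | inr y => B2 y end); split.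
  by move=> t; case: (split t).
rewrite big_split_ord /= e1 e2; congr (_ + _); apply: eq_bigr => t _.
  by rewrite -/(unsplit (inl t)) unsplitK.
by rewrite -/(unsplit (inr t)) unsplitK.
Qed.

Lemma PTR1 X kappa : (\rank (ptrans kappa X) <= 1)%N -> PT_rank_le X 1.
Proof.
rewrite leq_eqVlt ltnS leqn0 mxrank_eq0 => /orP[/eqP h1|/eqP h0]; last first.
  by rewrite -(ptransK kappa X) h0 ptransZ0; apply: PTR0.
exists 1%N => //; exists (fun _ => X); split; first by move=> _; exists kappa.
by rewrite big_ord1.
Qed.

Lemma PTR_sum I (r : seq I) (P : pred I) (G : I -> pmat F n d) (m : I -> nat) :
  (forall i, P i -> PT_rank_le (G i) (m i)) ->
  PT_rank_le (\sum_(i <- r | P i) G i) (\sum_(i <- r | P i) m i)%N.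
Proof.
move=> h; apply: (big_ind2 (fun A r => PT_rank_le A r)) => //.
  exact: PTR0.
move=> ? ? ? ?; exact: PTRD.
Qed.

Lemma PTR_main (P : pred {set 'I_d}) s (c : 'I_s -> idx n d -> F) b :
  PT_rank_le (\sum_(kappa | P kappa) \sum_(t < s) b *: ptrans kappa (Rm (c t)))
             (#|P| * s)%N.
Proof.
have -> : (#|P| * s = \sum_(kappa | P kappa) \sum_(t < s) 1)%N.
  rewrite -[in LHS](card_ord s) -sum_nat_const; apply: eq_bigr => k _.
  by rewrite sum_nat_const card_ord muln1.
apply: PTR_sum => kappa _; apply: PTR_sum => t _.
apply: (@PTR1 _ kappa).
by rewrite ptransZ ptransK (leq_trans (mxrank_scale _ _)) ?Rm_rank.
Qed.

End PTR.

Lemma two_neq0 (F : fieldType) : ~~ (2%N \in [pchar F]) -> (2%:R : F) != 0.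
Proof. by move=> h; apply/negP => h2; apply/negP: h; rewrite inE /= h2. Qed.

Lemma card_setT (T : finType) : #|{set T}| = (2 ^ #|T|)%N.
Proof.
transitivity #|[set: {set T}]|; first by rewrite cardsT.
by rewrite -powersetT card_powerset cardsT.
Qed.

Lemma Rm_compl (F : fieldType) n d (c : idx n d -> F) kappa :
  ptrans (~: kappa) (Rm c) = ptrans kappa (Rm c).
Proof.
apply: ent_ext => i j; rewrite !ptransE !Rm_ent mulrC; congr (c _ * c _);
 apply/ffunP => k; rewrite !ffunE inE; by case: (k \in kappa).
Qed.

End Aux.
Import Aux GRing.Theory.

Theorem lemma3p15 (F : fieldType) (n d : nat) (M : pmat F n d) :
  ~~ (2%N \in [pchar F]) ->
  fully_symmetric M ->
  forall s : nat, is_SoS (QM M) s ->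
  PT_rank_le M (2 ^ d.-1 * s)%N.
Proof.
move=> hc hM s [c hs]; have h2 := two_neq0 hc.
pose N := \sum_(t < s) Rm (c t).
have QN : QM N = QM M by rewrite QM_sum hs; apply: eq_bigr => t _; rewrite QM_Rm.
pose a := ((2%:R : F) ^+ d)^-1.
have h2d : (2%:R : F) ^+ d != 0 by rewrite expf_neq0.
pose SymN := a *: \sum_(kappa : {set 'I_d}) ptrans kappa N.
have QS : QM SymN = QM N.
  rewrite QMZ QM_sum (eq_bigr (fun _ => QM N)); last by move=> k _; rewrite QM_ptrans.
  rewrite sumr_const card_setT card_ord -scaler_nat scalerA natrX.
  by rewrite mulVf // scale1r.
have fsS : fully_symmetric SymN.
  move=> k; rewrite /ptrans1 /SymN ptransZ ptrans_sum; congr (_ *: _).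
  pose h (kappa : {set 'I_d}) := [set x | (x \in [set k]) (+) (x \in kappa)].
  have hK : involutive h.
    by move=> kappa; apply/setP => x; rewrite !inE addbA addbb.
  rewrite (eq_bigr (fun kappa => ptrans (h kappa) N)); last first.
    by move=> kappa _; apply: ptrans_comp => x; rewrite /h inE.
  by rewrite (reindex_inj (inv_inj hK)) /=; apply: eq_bigr => kappa _; rewrite hK.
have eM : M = SymN.
  apply/eqP; rewrite -subr_eq0; apply/eqP; apply: QM_inj => //.
    move=> k; have := hM k; have := fsS k; rewrite /ptrans1 ptransD ptransN => -> ->. done.
  by rewrite QMD QMN QS QN subrr.
have eS : SymN = \sum_(kappa : {set 'I_d}) \sum_(t < s) a *: ptrans kappa (Rm (c t)).
  rewrite /SymN scaler_sumr; apply: eq_bigr => kappa _.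
  by rewrite ptrans_sum scaler_sumr.
rewrite eM eS.
have [d0|dpos] := posnP d.
  have e : #|@predT {set 'I_d}| = (2 ^ d.-1)%N.
    by rewrite card_setT card_ord d0.
  by have := PTR_main predT c a; rewrite e.
pose x := Ordinal dpos.
rewrite (bigID (fun kappa : {set 'I_d} => x \in kappa)) /=.
rewrite (reindex_inj (@setC_inj 'I_d)) /=.
under eq_bigl do rewrite in_setC.
under eq_bigr do (under eq_bigr do rewrite Rm_compl).
rewrite -big_split /=.
under eq_bigr do rewrite -big_split /=.
under eq_bigr do (under eq_bigr do rewrite -scalerDl).
have -> : (2 ^ d.-1 = #|[pred kappa : {set 'I_d} | x \notin kappa]|)%N.
  rewrite -[in LHS](card_ord d) -(cardsC1 x) -card_powerset; apply: eq_card => kappa.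
  rewrite [RHS]inE /= -disjoints1 disjoint_sym -powersetCE. done.
exact: PTR_main.
Qed.
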